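(* For every graph $G$ and every positive integer $k$, $\gamma_k(G)\le \chi_{\mu_k}(G)$.
   Context: All graphs are finite, simple and undirected. $d_G(u,v)$ denotes the distance in $G$; a $u,v$-geodesic is a shortest $u,v$-path. For a positive integer $k$, a set $M\subseteq V(G)$ is a $k$-distance mutual-visibility set if for every two vertices $u,v\in M$ there exists a $u,v$-geodesic of length at most $k$ none of whose internal vertices lies in $M$. The $k$-distance mutual-visibility chromatic number $\chi_{\mu_k}(G)$ is the minimum cardinality of a partition of $V(G)$ into $k$-distance mutual-visibility sets. A set $D\subseteq V(G)$ is a distance $k$-dominating set if every vertex of $V(G)\setminus D$ is at distance at most $k$ from some vertex of $D$; $\gamma_k(G)$ is the minimum cardinality of such a set. *)

(* Defs.v *)
(* A finite simple graph on vertex type T is a symmetric,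
   irreflexive boolean relation e : rel T. *)
From mathcomp Require Import all_boot.
Set Implicit Arguments. Unset Strict Implicit. Unset Printing Implicit Defensive.

Section Graphs.
Variables (T : finType) (e : rel T).

(* A u,v-walk is a sequence p with path e u p and last u p = v;
   its length is size p (number of edges). *)
Definition walk (u v : T) (p : seq T) : Prop := path e u p /\ last u p = v.

Definition dist_le (k : nat) (u v : T) : Prop :=
  exists p, walk u v p /\ size p <= k.

Definition geodesic (u v : T) (p : seq T) : Prop :=
  walk u v p /\ forall q, walk u v q -> size p <= size q.

(* Internal vertices of the walk u :: p (all vertices except u and last u p). *)
Definition internal (u : T) (p : seq T) : seq T := behead (belast u p).

Definition kdmv_set (k : nat) (M : {set T}) : Prop :=
  forall u v, u \in M -> v \in M ->
    exists p, geodesic u v p /\ size p <= k /\ all (fun x => x \notin M) (internal u p).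

Definition dist_k_dominating (k : nat) (D : {set T}) : Prop :=
  forall x, x \notin D -> exists y, y \in D /\ dist_le k y x.

Definition is_min_card (U : finType) (P : {set U} -> Prop) (n : nat) : Prop :=
  (exists X, P X /\ #|X| = n) /\ (forall X, P X -> n <= #|X|).

Definition is_gamma_k (k n : nat) : Prop := is_min_card (dist_k_dominating k) n.

Definition is_chi_mu_k (k n : nat) : Prop :=
  is_min_card (fun P : {set {set T}} =>
                 partition P [set: T] /\ forall M, M \in P -> kdmv_set k M) n.
End Graphs.

(* Main.v *)
Require Import Defs.
From mathcomp Require Import all_boot.

Theorem proposition2p3 (T : finType) (e : rel T)
  (e_sym : symmetric e) (e_irr : irreflexive e)
  (k : nat) (k_pos : 0 < k) (g c : nat) :
  is_gamma_k e k g -> is_chi_mu_k e k c -> g <= c.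
Proof.
move=> [_ Hg] [[P [[Hpart Hvis] HPc]] _].
set s := [seq [pick z in M] | M : {set T} <- enum P].
set D := [set y in pmap id s].
have HD : dist_k_dominating e k D.
  move=> x _.
  case/and3P: Hpart => /eqP Hcov _ _.
  have xc : x \in cover P by rewrite Hcov inE.
  have MP := pblock_mem xc.
  have xM : x \in pblock P x by rewrite mem_pblock.
  case Hpk : [pick z in pblock P x] => [y|]; last first.
    by case: (pickP [pred z | z \in pblock P x]) Hpk => [z|H] //= _; move: (H x) => /=; rewrite xM.
  have yM : y \in pblock P x.
    by case: (pickP [pred z | z \in pblock P x]) Hpk => [z zM [<-]|] //.
  exists y; split.
    rewrite inE mem_pmap map_id -Hpk.
    by apply/mapP; exists (pblock P x); rewrite ?mem_enum.
  have [p [[Hw Hmin] [Hs _]]] := Hvis _ MP y x yM xM.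
  by exists p.
have := Hg D HD.
move=> /leq_trans; apply.
rewrite -HPc cardsE.
apply: leq_trans (card_size _) _.
by rewrite size_pmap (leq_trans (count_size _ _)) // size_map cardE.
Qed.
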